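(* For each $n \geq 3$, $\operatorname{ssp}(K_n) \geq n$.
   Context: A family $\mathcal{P}$ of paths in a graph $G$ is strong-separating if for every ordered pair of distinct edges $e,f$ of $G$ there is a path in $\mathcal{P}$ containing $e$ but not $f$; $\operatorname{ssp}(G)$ is the minimum size of such a family. $K_n$ is the complete graph on $n$ vertices. *)

(* Defs.v *)
From mathcomp Require Import all_boot.
Set Implicit Arguments. Unset Strict Implicit. Unset Printing Implicit Defensive.

(* A simple graph on a finite vertex type T is given by a symmetric,
   irreflexive adjacency relation adj.  Edges are the 2-element sets {x,y}
   with adj x y. *)
Definition is_edge (T : finType) (adj : rel T) (e : {set T}) : Prop :=
  exists x y, adj x y /\ e = [set x; y].

Definition is_gpath (T : finType) (adj : rel T) (p : seq T) : bool :=
  if p is x :: q then path adj x q && uniq p else false.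

Definition path_edges (T : finType) (p : seq T) : seq {set T} :=
  [seq [set xy.1; xy.2] | xy <- zip p (behead p)].

(* A family of paths (given as a list; its size is the number of distinct
   paths in it) is strong-separating if for every ordered pair of distinct
   edges e, f there is a path of the family containing e but not f. *)
Definition strong_separating (T : finType) (adj : rel T) (F : seq (seq T)) : Prop :=
  (forall p, p \in F -> is_gpath adj p) /\
  (forall e f, is_edge adj e -> is_edge adj f -> e <> f ->
     exists2 p, p \in F & (e \in path_edges p) && (f \notin path_edges p)).

Definition Kadj (n : nat) : rel 'I_n := fun x y => x != y.

(* Main.v *)
Require Import Defs.
From mathcomp Require Import all_boot zify.
Set Implicit Arguments. Unset Strict Implicit. Unset Printing Implicit Defensive.

Lemma unzip1_zb (T : eqType) (a : T) q : unzip1 (zip (a :: q) q) = belast a q.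
Proof. by elim: q a => [|b q IH] a //=; rewrite IH. Qed.

Lemma zip_path (T : eqType) (r : rel T) a q x y :
  path r a q -> (x, y) \in zip (a :: q) q -> r x y.
Proof.
elim: q a => [|b q IH] a //= /andP[hab hp].
rewrite inE => /orP[/eqP[-> ->] // | h].
exact: IH hp h.
Qed.

Lemma count_edges (T : finType) (v : T) a q :
  count (fun e : {set T} => v \in e) (path_edges (a :: q))
  <= count_mem v (belast a q) + count_mem v q.
Proof.
rewrite /path_edges count_map /=.
set z := zip (a :: q) q.
have -> : count_mem v (belast a q) = count (fun xy : T * T => xy.1 == v) z.
  by rewrite -unzip1_zb /z count_map.
have -> : count_mem v q = count (fun xy : T * T => xy.2 == v) z.
  by rewrite -{1}(@unzip2_zip _ _ (a :: q) q) ?count_map //= leqnSn.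
rewrite -count_predUI; apply: leq_trans (leq_addr _ _).
apply: sub_count => -[x y] /=; rewrite !inE => /orP[] /eqP ->; rewrite eqxx ?orbT //.
Qed.

Lemma sum_star (T : finType) (v : T) (e : {set T}) :
  \sum_(x | x != v) ([set v; x] == e : nat) <= (v \in e).
Proof.
case: (boolP (v \in e)) => hv.
  case: (pickP (fun x => (x != v) && ([set v; x] == e))) =>
    [x0 /andP[hx0 /eqP he] | none].
    apply: (@leq_trans (\sum_(x | x != v) (x == x0 : nat))).
      apply: leq_sum => x hx; case: eqP => //= hxe.
      have : x \in e by rewrite -hxe !inE eqxx orbT.
      by rewrite -he !inE (negbTE hx) /= => ->.
    rewrite (bigD1 x0) //= eqxx big1 // => x /andP[_ hx].
    by rewrite (negbTE hx).
  by rewrite big1 // => x hx; have := none x; rewrite hx /= => ->.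
rewrite big1 // => x _; case: eqP => // he; move: hv; rewrite -he !inE eqxx; done.
Qed.

Lemma cbound (T : finType) (v : T) (s : seq {set T}) :
  \sum_(x | x != v) ([set v; x] \in s : nat) <= count (fun e : {set T} => v \in e) s.
Proof.
elim: s => [|e s IH]; first by rewrite big1.
rewrite /=; apply: (@leq_trans (\sum_(x | x != v)
   (([set v; x] == e : nat) + ([set v; x] \in s : nat)))).
  by apply: leq_sum => x _; rewrite inE; case: (_ == _); case: (_ \in _).
by rewrite big_split /= leq_add // sum_star.
Qed.

Lemma size_pe (T : finType) (p : seq T) : size (path_edges p) = (size p).-1.
Proof. by rewrite /path_edges size_map size_zip size_behead; case: p => //= a q; apply/minn_idPr; apply: leqnSn. Qed.

Lemma edge_of_path n (p : seq 'I_n) e :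
  is_gpath (@Kadj n) p -> e \in path_edges p -> is_edge (@Kadj n) e.
Proof.
case: p => [|a q] //= /andP[hp _] /mapP[[x y] hxy ->].
exists x, y; split => //; exact: zip_path hp hxy.
Qed.

Lemma other_edge (T : finType) (adj : rel T) (p : seq T) e :
  is_gpath adj p -> e \in path_edges p -> size p != 2 ->
  exists2 f, f \in path_edges p & f != e.
Proof.
case: p => [|a [|b [|c r]]] //.
move=> /andP[_ /andP[ha _]] he _.
have hab : a != b by apply: contraNneq ha => ->; rewrite mem_head.
have hac : a != c by apply: contraNneq ha => ->; rewrite in_cons mem_head orbT.
have pe : path_edges [:: a, b, c & r] = [set a; b] :: [set b; c] :: path_edges [:: c & r] by [].
case: (eqVneq e [set a; b]) => [-> | hne].
  exists [set b; c]; first by rewrite pe in_cons mem_head orbT.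
  apply/eqP => hh; have : a \in [set b; c] by rewrite hh in_set2 eqxx.
  by rewrite in_set2 (negbTE hab) (negbTE hac).
by exists [set a; b]; [rewrite pe mem_head | rewrite eq_sym].
Qed.

Lemma sum_ind (T : eqType) (U : seq T) p1 :
  \sum_(p <- U) (p == p1 : nat) = count_mem p1 U.
Proof. by rewrite -sum1_count [RHS]big_mkcond /=; apply: eq_bigr => p _; case: eqP. Qed.

Definition wt (T : Type) (p : seq T) := if size p == 2 then 2 else 1.

Lemma wt_pos (T : Type) (p : seq T) : 0 < wt p.
Proof. by rewrite /wt; case: ifP. Qed.

Lemma cb (T : finType) (adj : rel T) (v : T) a q :
  is_gpath adj (a :: q) ->
  \sum_(x | x != v) ([set v; x] \in path_edges (a :: q) : nat)
    <= minn ((v \in a :: q) + (v \in q)) (size q).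
Proof.
move=> /andP[_ hu].
have hb : uniq (belast a q).
  by move: hu; rewrite lastI rcons_uniq => /andP[].
have hq : uniq q by move: hu; rewrite cons_uniq => /andP[].
apply: (leq_trans (cbound v _)); rewrite leq_min; apply/andP; split.
  apply: (leq_trans (count_edges v a q)).
  rewrite !count_uniq_mem // leq_add2r.
  by case: (boolP (v \in belast a q)) => // hv; rewrite lastI mem_rcons in_cons hv orbT.
by apply: (leq_trans (count_size _ _)); rewrite size_pe.
Qed.

Lemma sum_const2 (T : Type) (U : seq T) : \sum_(p <- U) 2 = 2 * size U.
Proof. by elim: U => [|p U IH]; rewrite ?big_nil ?big_cons ?IH ?muln0 ?mulnS. Qed.

Theorem proposition2p1 (n : nat) : 3 <= n ->
  forall F : seq (seq 'I_n), strong_separating (@Kadj n) F ->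
  n <= size (undup F).
Proof.
move=> hn F [hgp hsep].
set U := undup F.
have hU : uniq U by apply: undup_uniq.
have hgU : forall p, p \in U -> is_gpath (@Kadj n) p.
  by move=> p; rewrite mem_undup; apply: hgp.
have third : forall x v : 'I_n, exists y : 'I_n, (y != x) && (y != v).
  move=> x v.
  case: (pickP (fun y => y \notin [set x; v])) => [y hy | none].
    by exists y; move: hy; rewrite in_set2 negb_or.
  have hT : [set x; v] = setT.
    by apply/setP => y; rewrite in_setT; apply: negbFE; exact: none y.
  have := cards2 x v; rewrite hT cardsT card_ord.
  by case: (x != v) => hh; rewrite hh in hn.
have isE : forall v x : 'I_n, x != v -> is_edge (@Kadj n) [set v; x].
  by move=> v x hx; exists v, x; split => //; rewrite /Kadj eq_sym.
have Nx : forall v x : 'I_n, x != v ->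
    2 <= \sum_(p <- U) ([set v; x] \in path_edges p : nat) * wt p.
  move=> v x hx.
  have [y /andP[hyx hyv]] := third x v.
  have ne : [set v; x] <> [set v; y].
    move=> hh; have : y \in [set v; x] by rewrite hh in_set2 eqxx orbT.
    by rewrite in_set2 (negbTE hyx) (negbTE hyv).
  have [p1 hp1 /andP[he1 _]] := hsep _ _ (isE v x hx) (isE v y hyv) ne.
  have p1U : p1 \in U by rewrite mem_undup.
  case: (eqVneq (size p1) 2) => hs.
    rewrite (bigD1_seq p1) //= he1 /wt hs eqxx /=.
    exact: leq_addr.
  have [f hf hfe] := other_edge (hgU _ p1U) he1 hs.
  have fE := edge_of_path (hgU _ p1U) hf.
  have nef : [set v; x] <> f.
    by move=> h; move: hfe; rewrite h => /eqP; apply.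
  have [q hq /andP[heq hfq]] := hsep _ _ (isE v x hx) fE nef.
  have qU : q \in U by rewrite mem_undup.
  have hqp : q != p1 by apply: contraNneq hfq => ->.
  apply: (@leq_trans (\sum_(p <- U) ((p == p1 : nat) + (p == q : nat)))).
    by rewrite big_split /= !sum_ind !count_uniq_mem // p1U qU.
  apply: leq_sum => p _.
  case: (eqVneq p p1) => [-> | hpp1].
    by rewrite eq_sym (negbTE hqp) he1 addn0 mul1n wt_pos.
  case: (eqVneq p q) => [-> | hpq]; last by [].
  by rewrite heq mul1n wt_pos.
have Tb : forall p v, p \in U ->
    \sum_(x | x != v) ([set v; x] \in path_edges p : nat) * wt p <= 2.
  move=> p v pU; rewrite -big_distrl /=.
  have := hgU _ pU; case: p pU => [|a q] // pU hg.
  have := cb v hg; rewrite /wt /=.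
  set S := \sum_(x | x != v) _.
  move=> h; have h1 := leq_trans h (geq_minl _ _); have h2 := leq_trans h (geq_minr _ _).
  have b1 := leq_b1 (v \in a :: q); have b2 := leq_b1 (v \in q).
  case: eqP => hs; lia.
have h0 : 0 < n by apply: ltn_trans hn.
pose v0 := Ordinal h0.
have [x0 /andP[hx0 _]] := third v0 v0.
have Nx0 := Nx v0 x0 hx0.
have [p0 p0U] : exists p0, p0 \in U.
  move: Nx0; case hUe: U => [|p0 U'] /=; first by rewrite big_nil.
  by move=> _; exists p0; rewrite mem_head.
have [v hv] : exists v, \sum_(x | x != v) ([set v; x] \in path_edges p0 : nat) * wt p0 <= 1.
  have := hgU _ p0U; case: p0 p0U => [|a q] // p0U hg.
  have hq : a \notin q by move: hg => /andP[_]; rewrite cons_uniq => /andP[].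
  case: (leqP (size q) 1) => hsq.
    have [v hv] : exists v, v \notin a :: q.
      case: q hsq hq hg p0U => [|b [|c r]] // _ _ _ _.
        by have [y /andP[hy _]] := third a a; exists y; rewrite mem_seq1.
      by have [y /andP[hy1 hy2]] := third a b; exists y; rewrite !in_cons in_nil (negbTE hy1) (negbTE hy2).
    exists v; rewrite -big_distrl /=.
    have := cb v hg; move: hv; rewrite in_cons negb_or => /andP[hva hvq].
    rewrite (negbTE hva) (negbTE hvq) /=.
    set S := \sum_(x | x != v) _; move=> h.
    have h1 := leq_trans h (geq_minl _ _); have -> : S = 0 by lia.
    by [].
  exists a; rewrite -big_distrl /=.
  have := cb a hg; rewrite mem_head (negbTE hq) /wt /=.
  set S := \sum_(x | x != a) _; move=> h.
  have h1 := leq_trans h (geq_minl _ _).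
  have -> : (size q).+1 == 2 = false by apply/eqP; lia.
  lia.
have L : 2 * n.-1 <= \sum_(x | x != v) \sum_(p <- U) ([set v; x] \in path_edges p : nat) * wt p.
  apply: (@leq_trans (\sum_(x | x != v) 2)); last by apply: leq_sum => x hx; exact: Nx.
  by rewrite sum_nat_const cardC1 card_ord mulnC.
rewrite exchange_big /= in L.
have R : \sum_(p <- U) (\sum_(x | x != v) ([set v; x] \in path_edges p : nat) * wt p
            + (p == p0 : nat)) <= 2 * size U.
  rewrite -sum_const2 big_seq [X in _ <= X]big_seq; apply: leq_sum => p pU.
  case: (eqVneq p p0) => [-> | hne]; first by rewrite addn1.
  by rewrite addn0 Tb.
rewrite big_split /= sum_ind count_uniq_mem // p0U in R.
change (nat_of_bool true) with 1 in R.
move: L R; set A := \sum_(j <- U) _ => L R.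
have h3 : 2 * n.-1 < 2 * size U by apply: leq_ltn_trans L _; rewrite -addn1.
rewrite ltn_pmul2l // in h3.
by move: h3; rewrite (prednK h0); exact: id.
Qed.
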